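(* Let $A$, $B$, $C$ be payoff Conway games and let $\sigma$ be a winning strategy on $A^*\otimes B$ and $\tau$ a winning strategy on $B^*\otimes C$. Then the composite strategy $\sigma;\tau$ on $A^*\otimes C$ is also winning.
   Context: A Conway game $A=(V_A,E_A,\lambda_A)$ is a rooted directed graph $(V_A,E_A)$ with root $\star_A$ together with a polarity map $\lambda_A:E_A\to\{-1,+1\}$ on moves ($-1$ = Opponent, $+1$ = Player). A path is a finite sequence of consecutive moves $x_0\to x_1\to\cdots\to x_k$, written $s:x_0\twoheadrightarrow x_k$; $\epsilon_x:x\twoheadrightarrow x$ is the empty path at $x$; $s;t$ denotes concatenation; $\mathrm{Path}_A$ is the set of paths. A play is a path starting at $\star_A$; it is alternating if consecutive moves have opposite polarities. A strategy $\sigma$ on $A$ is a set of alternating plays of even length that contains the empty play, whose nonempty plays start with an Opponent move, which is closed under even-length prefixes ($s\cdot m\cdot n\in\sigma\Rightarrow s\in\sigma$), and which is deterministic ($s\cdot m\cdot n\in\sigma$ and $s\cdot m\cdot n'\in\sigma$ imply $n=n'$). A payoff Conway game is a Conway game together with a payoff $\kappa_A=(\kappa_A^+,\kappa_A^-):\mathrm{Path}_A\to\mathbb{N}\times\mathbb{N}$ satisfying: (compatibility) for every move $m$, $\lambda_A(m)=-1\Rightarrow\kappa_A^+(m)=0$ and $\lambda_A(m)=+1\Rightarrow\kappa_A^-(m)=0$; (suffix domination) $\kappa_A(t)\le\kappa_A(s;t)$ for $s:x\twoheadrightarrow y$, $t:y\twoheadrightarrow z$; (subadditivity) $\kappa_A(s;t)\le\kappa_A(s)+\kappa_A(t)$;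 (norm) $\kappa_A(\epsilon_x)=(0,0)$; here $\le$ and $+$ on $\mathbb{N}\times\mathbb{N}$ are componentwise. Dual: $A^*=(V_A,E_A,-\lambda_A,(\kappa_A^-,\kappa_A^+))$. Tensor $A\otimes B$: positions $V_A\times V_B$ with root $(\star_A,\star_B)$; moves $(x,y)\to(x',y)$ for $(x,x')\in E_A$ and $(x,y)\to(x,y')$ for $(y,y')\in E_B$, with the polarity of the underlying move; payoff $\kappa_{A\otimes B}(s)=\kappa_A(s_{|A})+\kappa_B(s_{|B})$, where $s_{|A}$, $s_{|B}$ are the projections of $s$. A strategy $\sigma$ plays a path $t:x\twoheadrightarrow y$ if there is a play $s:\star\twoheadrightarrow x$ in $\sigma$ with $s;t\in\sigma$. A strategy is winning if every path $s$ it plays satisfies $\kappa^+(s)=0\Rightarrow\kappa^-(s)=0$. Composition: an interaction $u\in int(A,B,C)$ is a sequence of moves of $A$, $B$, $C$ whose projections on $A^*\otimes B$, $B^*\otimes C$ and $A^*\otimes C$ are plays; for $\sigma$ on $A^*\otimes B$ and $\tau$ on $B^*\otimes C$, $\sigma;\tau=\{u_{|A,C}\mid u\in int(A,B,C),\ u_{|A,B}\in\sigma,\ u_{|B,C}\in\tau\}$. *)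

(* Defs.v *)
From Stdlib Require Import List Arith.
Import ListNotations.
Set Implicit Arguments.

(** Moves are an abstract type [E] of edges
    (a multigraph) with source/target positions; polarity [pol m = true]
    means Player (+1), [false] means Opponent (-1).
    A path [x ->> z] is represented by its start position [x] and its list
    of moves; the payoff [(kp x s, km x s)] is its value on such a path. *)
Record game := Game {
  V : Type;
  E : Type;
  src : E -> V;
  tgt : E -> V;
  root : V;
  pol : E -> bool;
  kp : V -> list E -> nat;
  km : V -> list E -> nat
}.

Fixpoint is_path (G : game) (x : V G) (s : list (E G)) : Prop :=
  match s with
  | [] => True
  | m :: s' => src G m = x /\ is_path G (tgt G m) s'
  end.

Fixpoint endv (G : game) (x : V G) (s : list (E G)) : V G :=
  match s with
  | [] => x
  | m :: s' => endv G (tgt G m) s'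
  end.

Definition is_play (G : game) (s : list (E G)) : Prop := is_path G (root G) s.

Fixpoint alternating (G : game) (s : list (E G)) : Prop :=
  match s with
  | m :: ((n :: _) as s') => pol G m <> pol G n /\ alternating G s'
  | _ => True
  end.

Definition payoff_game (G : game) : Prop :=
  (forall m : E G, pol G m = false -> kp G (src G m) [m] = 0) /\
  (forall m : E G, pol G m = true -> km G (src G m) [m] = 0) /\
  (forall (x : V G) (s t : list (E G)),
      is_path G x s -> is_path G (endv G x s) t ->
      kp G (endv G x s) t <= kp G x (s ++ t) /\
      km G (endv G x s) t <= km G x (s ++ t)) /\
  (forall (x : V G) (s t : list (E G)),
      is_path G x s -> is_path G (endv G x s) t ->
      kp G x (s ++ t) <= kp G x s + kp G (endv G x s) t /\
      km G x (s ++ t) <= km G x s + km G (endv G x s) t) /\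
  (forall x : V G, kp G x [] = 0 /\ km G x [] = 0).

Definition dual (G : game) : game :=
  Game (src G) (tgt G) (root G) (fun m => negb (pol G m)) (km G) (kp G).

(** Tensor A (x) B.  A move (x,y) -> (x',y) coming from the A-move m is
    [inl (m, y)]; a move (x,y) -> (x,y') coming from the B-move n is
    [inr (x, n)]. *)
Section Tensor.
Variables G H : game.

Definition tE : Type := ((E G * V H) + (V G * E H))%type.

Definition t_src (e : tE) : V G * V H :=
  match e with inl (m, y) => (src G m, y) | inr (x, n) => (x, src H n) end.
Definition t_tgt (e : tE) : V G * V H :=
  match e with inl (m, y) => (tgt G m, y) | inr (x, n) => (x, tgt H n) end.
Definition t_pol (e : tE) : bool :=
  match e with inl (m, _) => pol G m | inr (_, n) => pol H n end.

Fixpoint projL (s : list tE) : list (E G) :=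
  match s with
  | [] => []
  | inl (m, _) :: s' => m :: projL s'
  | inr _ :: s' => projL s'
  end.
Fixpoint projR (s : list tE) : list (E H) :=
  match s with
  | [] => []
  | inl _ :: s' => projR s'
  | inr (_, n) :: s' => n :: projR s'
  end.

Definition tensor : game :=
  Game t_src t_tgt (root G, root H) t_pol
    (fun p s => kp G (fst p) (projL s) + kp H (snd p) (projR s))
    (fun p s => km G (fst p) (projL s) + km H (snd p) (projR s)).

(** Turn a sequence of moves of G and H (with [None] for moves of other
    games, which are ignored) into a sequence of moves of [tensor],
    tracking the current positions (x, y). *)
Fixpoint tproj (x : V G) (y : V H) (l : list (option (E G + E H)))
  : list (E tensor) :=
  match l with
  | [] => []
  | None :: l' => tproj x y l'
  | Some (inl m) :: l' => inl (m, y) :: tproj (tgt G m) y l'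
  | Some (inr n) :: l' => inr (x, n) :: tproj x (tgt H n) l'
  end.
End Tensor.

Definition strategy (G : game) (sigma : list (E G) -> Prop) : Prop :=
  (forall s, sigma s ->
     is_play G s /\ alternating G s /\ Nat.Even (length s)) /\
  sigma [] /\
  (forall m s, sigma (m :: s) -> pol G m = false) /\
  (forall s m n, sigma (s ++ [m; n]) -> sigma s) /\
  (forall s m n n', sigma (s ++ [m; n]) -> sigma (s ++ [m; n']) -> n = n').

Definition plays (G : game) (sigma : list (E G) -> Prop)
    (x : V G) (t : list (E G)) : Prop :=
  exists s, sigma s /\ endv G (root G) s = x /\ sigma (s ++ t).

Definition winning (G : game) (sigma : list (E G) -> Prop) : Prop :=
  forall x t, plays G sigma x t -> kp G x t = 0 -> km G x t = 0.

Section Composition.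
Variables A B C : game.

Definition imove : Type := ((E A + E B) + E C)%type.

Definition selAB (e : imove) : option (E (dual A) + E B) :=
  match e with inl (inl a) => Some (inl a) | inl (inr b) => Some (inr b)
             | inr _ => None end.
Definition selBC (e : imove) : option (E (dual B) + E C) :=
  match e with inl (inl _) => None | inl (inr b) => Some (inl b)
             | inr c => Some (inr c) end.
Definition selAC (e : imove) : option (E (dual A) + E C) :=
  match e with inl (inl a) => Some (inl a) | inl (inr _) => None
             | inr c => Some (inr c) end.

Definition projAB (u : list imove) : list (E (tensor (dual A) B)) :=
  tproj (dual A) B (root A) (root B) (map selAB u).
Definition projBC (u : list imove) : list (E (tensor (dual B) C)) :=
  tproj (dual B) C (root B) (root C) (map selBC u).
Definition projAC (u : list imove) : list (E (tensor (dual A) C)) :=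
  tproj (dual A) C (root A) (root C) (map selAC u).

Definition interaction (u : list imove) : Prop :=
  is_play (tensor (dual A) B) (projAB u) /\
  is_play (tensor (dual B) C) (projBC u) /\
  is_play (tensor (dual A) C) (projAC u).

Definition compose (sigma : list (E (tensor (dual A) B)) -> Prop)
    (tau : list (E (tensor (dual B) C)) -> Prop)
    : list (E (tensor (dual A) C)) -> Prop :=
  fun s => exists u, interaction u /\ sigma (projAB u) /\
                     tau (projBC u) /\ s = projAC u.
End Composition.

(* Main.v *)
Require Import Defs.
From Stdlib Require Import List Arith Lia.
Import ListNotations.

Lemma is_path_app (G : game) x l1 l2 :
  is_path G x (l1 ++ l2) <-> is_path G x l1 /\ is_path G (endv G x l1) l2.
Proof.
  revert x; induction l1 as [|m l1 IH]; intros x; simpl.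
  - tauto.
  - rewrite IH; tauto.
Qed.

Lemma endv_app (G : game) x l1 l2 :
  endv G x (l1 ++ l2) = endv G (endv G x l1) l2.
Proof. revert x; induction l1; intros; simpl; auto. Qed.

Lemma endv_dual (G : game) x l : endv (dual G) x l = endv G x l.
Proof. revert x; induction l; intros; simpl; auto. Qed.
Lemma is_path_dual (G : game) x l : is_path (dual G) x l <-> is_path G x l.
Proof. revert x; induction l; intros; simpl; try rewrite IHl; tauto. Qed.

Section T.
Variables G H : game.

Fixpoint fl (l : list (option (E G + E H))) : list (E G) :=
  match l with
  | [] => []
  | Some (inl m) :: l' => m :: fl l'
  | _ :: l' => fl l'
  end.
Fixpoint fr (l : list (option (E G + E H))) : list (E H) :=
  match l with
  | [] => []
  | Some (inr m) :: l' => m :: fr l'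
  | _ :: l' => fr l'
  end.

Lemma projL_tproj x y l : projL (tproj G H x y l) = fl l.
Proof.
  revert x y; induction l as [|[[m|n]|] l IH]; intros; simpl; try rewrite IH; auto.
Qed.
Lemma projR_tproj x y l : projR (tproj G H x y l) = fr l.
Proof.
  revert x y; induction l as [|[[m|n]|] l IH]; intros; simpl; try rewrite IH; auto.
Qed.
Lemma tproj_app x y l1 l2 :
  tproj G H x y (l1 ++ l2) =
  tproj G H x y l1 ++ tproj G H (endv G x (fl l1)) (endv H y (fr l1)) l2.
Proof.
  revert x y; induction l1 as [|[[m|n]|] l IH]; intros; simpl; try rewrite IH; auto.
Qed.
Lemma endv_tproj x y l :
  endv (tensor G H) (x, y) (tproj G H x y l) = (endv G x (fl l), endv H y (fr l)).
Proof.
  revert x y; induction l as [|[[m|n]|] l IH]; intros; simpl; try rewrite IH; auto.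
Qed.
Lemma path_tproj x y l :
  is_path (tensor G H) (x, y) (tproj G H x y l) -> is_path G x (fl l) /\ is_path H y (fr l).
Proof.
  revert x y; induction l as [|[[m|n]|] l IH]; intros x y Hp; simpl in *; auto.
  - destruct Hp as [Hs Hp]. injection Hs; intros; subst.
    destruct (IH _ _ Hp); auto.
  - destruct Hp as [Hs Hp]. injection Hs; intros; subst.
    destruct (IH _ _ Hp); auto.
Qed.
Lemma tproj_split x y l s t :
  tproj G H x y l = s ++ t -> exists l1 l2, l = l1 ++ l2 /\ tproj G H x y l1 = s /\
    tproj G H (endv G x (fl l1)) (endv H y (fr l1)) l2 = t.
Proof.
  revert x y s; induction l as [|o l IH]; intros x y s Heq.
  - destruct s; simpl in Heq; [|discriminate]. exists [], []; auto.
  - destruct s as [|e s].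
    + exists [], (o :: l); simpl; auto.
    + destruct o as [[m|n]|]; simpl in Heq.
      * injection Heq; intros Ht He.
        destruct (IH _ _ _ Ht) as (l1 & l2 & -> & H1 & H2).
        exists (Some (inl m) :: l1), l2; simpl; subst; auto.
      * injection Heq; intros Ht He.
        destruct (IH _ _ _ Ht) as (l1 & l2 & -> & H1 & H2).
        exists (Some (inr n) :: l1), l2; simpl; subst; auto.
      * destruct (IH _ _ (e :: s) Heq) as (l1 & l2 & -> & H1 & H2).
        exists (None :: l1), l2; simpl; subst; auto.
Qed.
End T.

Lemma strat_prefix (G : game) sg : strategy G sg ->
  forall n P Q, length Q = 2 * n -> sg (P ++ Q) -> sg P.
Proof.
  intros (_ & _ & _ & Hpre & _).
  induction n as [|n IH]; intros P Q HL HQ.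
  - destruct Q; [|simpl in HL; lia]. rewrite app_nil_r in HQ; auto.
  - destruct (rev Q) as [|y [|x r]] eqn:Hr.
    + assert (Q = []) by (rewrite <- (rev_involutive Q), Hr; auto). subst; simpl in HL; lia.
    + assert (Q = [y]) by (rewrite <- (rev_involutive Q), Hr; auto). subst; simpl in HL; lia.
    + assert (Q = rev r ++ [x; y]) by (rewrite <- (rev_involutive Q), Hr; simpl; rewrite <- app_assoc; auto).
      subst Q. rewrite app_assoc in HQ. apply Hpre in HQ.
      apply (IH P (rev r)); auto. rewrite length_app in HL; simpl in HL; lia.
Qed.

Lemma strat_prefix' (G : game) sg : strategy G sg ->
  forall P Q, sg (P ++ Q) -> Nat.odd (length P) = false -> sg P.
Proof.
  intros Hs P Q HQ Ho.
  assert (Hev : Nat.Even (length (P ++ Q))) by (apply (proj1 Hs); auto).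
  rewrite length_app in Hev.
  assert (Nat.Even (length P)).
  { apply Nat.even_spec. rewrite <- Nat.negb_odd, Ho; auto. }
  assert (Nat.Even (length Q)) by (apply (Nat.Even_add_Even_inv_r (length P)); auto).
  destruct H0 as [n Hn]. apply (@strat_prefix G sg Hs n P Q); auto.
Qed.

Lemma alt_pol (G : game) : forall P e0 L e Q, alternating G (e0 :: L) ->
  e0 :: L = P ++ e :: Q -> pol G e = xorb (pol G e0) (Nat.odd (length P)).
Proof.
  induction P as [|p P IH]; intros e0 L e Q Ha Heq.
  - simpl in Heq. injection Heq; intros; subst. simpl. destruct (pol G e); auto.
  - simpl in Heq. injection Heq; intros HL Hp; subst p.
    destruct L as [|e1 L]. { destruct P; discriminate. }
    destruct Ha as [Hne Ha].
    rewrite (IH e1 L e Q Ha HL).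
    simpl length. rewrite Nat.odd_succ, <- Nat.negb_odd.
    destruct (pol G e0), (pol G e1), (Nat.odd (length P)); simpl; congruence.
Qed.

Lemma strat_pol (G : game) sg : strategy G sg ->
  forall P e Q, sg (P ++ e :: Q) -> pol G e = Nat.odd (length P).
Proof.
  intros Hs P e Q HQ.
  destruct (P ++ e :: Q) as [|e0 L] eqn:Heq.
  - destruct P; discriminate.
  - destruct Hs as (H1 & _ & H3 & _).
    pose proof (H3 _ _ HQ) as Hp0.
    destruct (H1 _ HQ) as (_ & Ha & _).
    rewrite (@alt_pol G P e0 L e Q Ha (eq_sym Heq)), Hp0. auto.
Qed.

Section Comp.
Variables A B C : game.

Fixpoint wA (u : list (imove A B C)) : list (E A) :=
  match u with [] => [] | inl (inl a) :: u' => a :: wA u' | _ :: u' => wA u' end.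
Fixpoint wB (u : list (imove A B C)) : list (E B) :=
  match u with [] => [] | inl (inr b) :: u' => b :: wB u' | _ :: u' => wB u' end.
Fixpoint wC (u : list (imove A B C)) : list (E C) :=
  match u with [] => [] | inr c :: u' => c :: wC u' | _ :: u' => wC u' end.

Lemma flAB u : fl (dual A) B (map (@selAB A B C) u) = wA u.
Proof. induction u as [|[[a|b]|c] u IH]; simpl; try (f_equal; exact IH); auto. Qed.
Lemma frAB u : fr (dual A) B (map (@selAB A B C) u) = wB u.
Proof. induction u as [|[[a|b]|c] u IH]; simpl; try (f_equal; exact IH); auto. Qed.
Lemma flBC u : fl (dual B) C (map (@selBC A B C) u) = wB u.
Proof. induction u as [|[[a|b]|c] u IH]; simpl; try (f_equal; exact IH); auto. Qed.
Lemma frBC u : fr (dual B) C (map (@selBC A B C) u) = wC u.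
Proof. induction u as [|[[a|b]|c] u IH]; simpl; try (f_equal; exact IH); auto. Qed.
Lemma flAC u : fl (dual A) C (map (@selAC A B C) u) = wA u.
Proof. induction u as [|[[a|b]|c] u IH]; simpl; try (f_equal; exact IH); auto. Qed.
Lemma frAC u : fr (dual A) C (map (@selAC A B C) u) = wC u.
Proof. induction u as [|[[a|b]|c] u IH]; simpl; try (f_equal; exact IH); auto. Qed.

Lemma wA_app u v : wA (u ++ v) = wA u ++ wA v.
Proof. induction u as [|[[a|b]|c] u IH]; simpl; try (f_equal; exact IH); auto. Qed.
Lemma wB_app u v : wB (u ++ v) = wB u ++ wB v.
Proof. induction u as [|[[a|b]|c] u IH]; simpl; try (f_equal; exact IH); auto. Qed.
Lemma wC_app u v : wC (u ++ v) = wC u ++ wC v.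
Proof. induction u as [|[[a|b]|c] u IH]; simpl; try (f_equal; exact IH); auto. Qed.

Lemma projAB_app p w : projAB (p ++ w) =
  projAB p ++ tproj (dual A) B (endv A (root A) (wA p)) (endv B (root B) (wB p)) (map (@selAB A B C) w).
Proof. unfold projAB. rewrite map_app, tproj_app, flAB, frAB, endv_dual. reflexivity. Qed.
Lemma projBC_app p w : projBC (p ++ w) =
  projBC p ++ tproj (dual B) C (endv B (root B) (wB p)) (endv C (root C) (wC p)) (map (@selBC A B C) w).
Proof. unfold projBC. rewrite map_app, tproj_app, flBC, frBC, endv_dual. reflexivity. Qed.

Variables (sigma : list (E (tensor (dual A) B)) -> Prop)
    (tau : list (E (tensor (dual B) C)) -> Prop).
Hypotheses (PA : payoff_game A) (PB : payoff_game B) (PC : payoff_game C)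
  (Ss : strategy (tensor (dual A) B) sigma) (Ws : winning (tensor (dual A) B) sigma)
  (St : strategy (tensor (dual B) C) tau) (Wt : winning (tensor (dual B) C) tau).

Variable U : list (imove A B C).
Hypotheses (HU : interaction U) (HsU : sigma (projAB U)) (HtU : tau (projBC U)).

Definition xA p := endv A (root A) (wA p).
Definition xB p := endv B (root B) (wB p).
Definition xC p := endv C (root C) (wC p).

Lemma sigma_at p w : p ++ w = U -> Nat.odd (length (projAB p)) = false ->
  km A (xA p) (wA w) + kp B (xB p) (wB w) = 0 ->
  kp A (xA p) (wA w) + km B (xB p) (wB w) = 0.
Proof.
  intros Hpw Ho Hk.
  assert (Hsp : sigma (projAB p ++ tproj (dual A) B (xA p) (xB p) (map (@selAB A B C) w))).
  { rewrite <- projAB_app, Hpw. auto. }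
  pose proof (Ws (xA p, xB p) (tproj (dual A) B (xA p) (xB p) (map (@selAB A B C) w))) as W.
  simpl in W. rewrite projL_tproj, projR_tproj, flAB, frAB in W. apply W; auto.
  exists (projAB p). split; [|split]; auto.
  - eapply strat_prefix'; eauto.
  - unfold projAB. etransitivity; [apply (endv_tproj (dual A) B (root A) (root B))|].
    rewrite flAB, frAB, endv_dual. reflexivity.
Qed.

Lemma tau_at p w : p ++ w = U -> Nat.odd (length (projBC p)) = false ->
  km B (xB p) (wB w) + kp C (xC p) (wC w) = 0 ->
  kp B (xB p) (wB w) + km C (xC p) (wC w) = 0.
Proof.
  intros Hpw Ho Hk.
  assert (Hsp : tau (projBC p ++ tproj (dual B) C (xB p) (xC p) (map (@selBC A B C) w))).
  { rewrite <- projBC_app, Hpw. auto. }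
  pose proof (Wt (xB p, xC p) (tproj (dual B) C (xB p) (xC p) (map (@selBC A B C) w))) as W.
  simpl in W. rewrite projL_tproj, projR_tproj, flBC, frBC in W. apply W; auto.
  exists (projBC p). split; [|split]; auto.
  - eapply strat_prefix'; eauto.
  - unfold projBC. etransitivity; [apply (endv_tproj (dual B) C (root B) (root C))|].
    rewrite flBC, frBC, endv_dual. reflexivity.
Qed.


Lemma xA_snoc p m : xA (p ++ [m]) = endv A (xA p) (wA [m]).
Proof. unfold xA. rewrite wA_app, endv_app. reflexivity. Qed.
Lemma xB_snoc p m : xB (p ++ [m]) = endv B (xB p) (wB [m]).
Proof. unfold xB. rewrite wB_app, endv_app. reflexivity. Qed.
Lemma xC_snoc p m : xC (p ++ [m]) = endv C (xC p) (wC [m]).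
Proof. unfold xC. rewrite wC_app, endv_app. reflexivity. Qed.

Lemma PathA : is_path A (root A) (wA U).
Proof.
  destruct HU as (H1 & _ & _). unfold is_play, projAB in H1.
  apply path_tproj in H1. destruct H1 as [H1 _]. rewrite flAB, is_path_dual in H1. exact H1.
Qed.
Lemma PathB : is_path B (root B) (wB U).
Proof.
  destruct HU as (H1 & _ & _). unfold is_play, projAB in H1.
  apply path_tproj in H1. destruct H1 as [_ H1]. rewrite frAB in H1. exact H1.
Qed.
Lemma PathC : is_path C (root C) (wC U).
Proof.
  destruct HU as (_ & H1 & _). unfold is_play, projBC in H1.
  apply path_tproj in H1. destruct H1 as [_ H1]. rewrite frBC in H1. exact H1.
Qed.

Lemma pathA_suf p w : p ++ w = U -> is_path A (xA p) (wA w).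
Proof. intros H. pose proof PathA as P. rewrite <- H, wA_app, is_path_app in P. apply P. Qed.
Lemma pathB_suf p w : p ++ w = U -> is_path B (xB p) (wB w).
Proof. intros H. pose proof PathB as P. rewrite <- H, wB_app, is_path_app in P. apply P. Qed.
Lemma pathC_suf p w : p ++ w = U -> is_path C (xC p) (wC w).
Proof. intros H. pose proof PathC as P. rewrite <- H, wC_app, is_path_app in P. apply P. Qed.

Lemma polA p a w : p ++ inl (inl a) :: w = U -> negb (pol A a) = Nat.odd (length (projAB p)).
Proof.
  intros H. pose proof HsU as Hs. rewrite <- H, projAB_app in Hs.
  exact (@strat_pol _ _ Ss _ _ _ Hs).
Qed.
Lemma polBab p b w : p ++ inl (inr b) :: w = U -> pol B b = Nat.odd (length (projAB p)).
Proof.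
  intros H. pose proof HsU as Hs. rewrite <- H, projAB_app in Hs.
  exact (@strat_pol _ _ Ss _ _ _ Hs).
Qed.
Lemma polBbc p b w : p ++ inl (inr b) :: w = U -> negb (pol B b) = Nat.odd (length (projBC p)).
Proof.
  intros H. pose proof HtU as Hs. rewrite <- H, projBC_app in Hs.
  exact (@strat_pol _ _ St _ _ _ Hs).
Qed.
Lemma polC p c w : p ++ inr c :: w = U -> pol C c = Nat.odd (length (projBC p)).
Proof.
  intros H. pose proof HtU as Hs. rewrite <- H, projBC_app in Hs.
  exact (@strat_pol _ _ St _ _ _ Hs).
Qed.

Lemma inv : forall w p, p ++ w = U -> km A (xA p) (wA w) = 0 -> kp C (xC p) (wC w) = 0 ->
  kp A (xA p) (wA w) = 0 /\ km C (xC p) (wC w) = 0 /\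
  kp B (xB p) (wB w) = 0 /\ km B (xB p) (wB w) = 0.
Proof.
  destruct PA as (cA1 & cA2 & sdA & saA & nA).
  destruct PB as (cB1 & cB2 & sdB & saB & nB).
  destruct PC as (cC1 & cC2 & sdC & saC & nC).
  induction w as [|m w IH]; intros p Hpw HA HC.
  - cbn [wA wB wC]. destruct (nA (xA p)), (nB (xB p)), (nC (xC p)). auto.
  - assert (Hp' : (p ++ [m]) ++ w = U) by (rewrite <- app_assoc; exact Hpw).
    pose proof (pathA_suf p _ Hpw) as QA.
    pose proof (pathB_suf p _ Hpw) as QB.
    pose proof (pathC_suf p _ Hpw) as QC.
    pose proof (sigma_at p (m :: w) Hpw) as SG.
    pose proof (tau_at p (m :: w) Hpw) as TA.
    destruct m as [[a|b]|c].
    + pose proof (polA p a w Hpw) as Hpol.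
      cbn [wA wB wC] in *.
      destruct QA as [Hsrc QA].
      destruct (sdA (xA p) [a] (wA w)) as [_ HA']; cbn; auto.
      cbn in HA'. rewrite HA in HA'.
      assert (Hk : km A (endv A (xA p) (wA [inl (inl a)])) (wA w) = 0) by (cbn; lia).
      rewrite <- xA_snoc in Hk.
      assert (HC' : kp C (xC (p ++ [inl (inl a)])) (wC w) = 0) by (rewrite xC_snoc; cbn; exact HC).
      destruct (IH _ Hp' Hk HC') as (I1 & I2 & I3 & I4).
      rewrite xA_snoc in I1. rewrite xB_snoc in I3, I4. rewrite xC_snoc in I2. cbn in I1, I2, I3, I4.
      repeat split; auto.
      destruct (pol A a) eqn:Ep.
      * assert (Hk2 : km A (xA p) (a :: wA w) + kp B (xB p) (wB w) = 0) by lia.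
        specialize (SG (eq_sym Hpol) Hk2). lia.
      * destruct (saA (xA p) [a] (wA w)) as [Hs _]; cbn; auto.
        cbn in Hs. rewrite <- Hsrc in Hs |- *. rewrite (cA1 a Ep) in Hs. lia.
    + pose proof (polBab p b w Hpw) as Hpol1.
      pose proof (polBbc p b w Hpw) as Hpol2.
      cbn [wA wB wC] in *.
      destruct QB as [Hsrc QB].
      destruct (sdB (xB p) [b] (wB w)) as [_ _]; cbn; auto.
      assert (HA' : km A (xA (p ++ [inl (inr b)])) (wA w) = 0) by (rewrite xA_snoc; cbn; exact HA).
      assert (HC' : kp C (xC (p ++ [inl (inr b)])) (wC w) = 0) by (rewrite xC_snoc; cbn; exact HC).
      destruct (IH _ Hp' HA' HC') as (I1 & I2 & I3 & I4).
      rewrite xA_snoc in I1. rewrite xB_snoc in I3, I4. rewrite xC_snoc in I2. cbn in I1, I2, I3, I4.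
      destruct (saB (xB p) [b] (wB w)) as [Hs1 Hs2]; cbn; auto.
      cbn in Hs1, Hs2. rewrite <- Hsrc in Hs1, Hs2 |- *.
      destruct (pol B b) eqn:Ep.
      * rewrite (cB2 b Ep) in Hs2.
        assert (Hm : km B (src B b) (b :: wB w) = 0) by lia.
        assert (Hk2 : km B (src B b) (b :: wB w) + kp C (xC p) (wC w) = 0) by lia.
        rewrite <- Hsrc in TA. specialize (TA (eq_sym Hpol2) Hk2). repeat split; auto; lia.
      * rewrite (cB1 b Ep) in Hs1.
        assert (Hm : kp B (src B b) (b :: wB w) = 0) by lia.
        assert (Hk2 : km A (xA p) (wA w) + kp B (src B b) (b :: wB w) = 0) by lia.
        rewrite <- Hsrc in SG. specialize (SG (eq_sym Hpol1) Hk2). repeat split; auto; lia.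
    + pose proof (polC p c w Hpw) as Hpol.
      cbn [wA wB wC] in *.
      destruct QC as [Hsrc QC].
      destruct (sdC (xC p) [c] (wC w)) as [HC' _]; cbn; auto.
      cbn in HC'. rewrite HC in HC'.
      assert (Hk : kp C (endv C (xC p) (wC [inr c])) (wC w) = 0) by (cbn; lia).
      rewrite <- xC_snoc in Hk.
      assert (HA' : km A (xA (p ++ [inr c])) (wA w) = 0) by (rewrite xA_snoc; cbn; exact HA).
      destruct (IH _ Hp' HA' Hk) as (I1 & I2 & I3 & I4).
      rewrite xA_snoc in I1. rewrite xB_snoc in I3, I4. rewrite xC_snoc in I2. cbn in I1, I2, I3, I4.
      repeat split; auto.
      destruct (pol C c) eqn:Ep.
      * destruct (saC (xC p) [c] (wC w)) as [_ Hs]; cbn; auto.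
        cbn in Hs. rewrite <- Hsrc in Hs |- *. rewrite (cC2 c Ep) in Hs. lia.
      * assert (Hk2 : km B (xB p) (wB w) + kp C (xC p) (c :: wC w) = 0) by lia.
        specialize (TA (eq_sym Hpol) Hk2). lia.
Qed.

End Comp.

Theorem mainTheorem2 (A B C : game)
    (sigma : list (E (tensor (dual A) B)) -> Prop)
    (tau : list (E (tensor (dual B) C)) -> Prop) :
  payoff_game A -> payoff_game B -> payoff_game C ->
  strategy (tensor (dual A) B) sigma -> winning (tensor (dual A) B) sigma ->
  strategy (tensor (dual B) C) tau -> winning (tensor (dual B) C) tau ->
  winning (tensor (dual A) C) (@compose A B C sigma tau).
Proof.
  intros PA PB PC Ss Ws St Wt x t [s [_ [Hx Hst]]] Hk.
  destruct Hst as (U & HU & HsU & HtU & Heq).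
  unfold projAC in Heq. symmetry in Heq.
  apply tproj_split in Heq as (l1 & l2 & Hl & H1 & H2).
  apply map_eq_app in Hl as (u1 & u2 & HU12 & Hm1 & Hm2).
  subst s t x l1 l2.
  assert (Ex : endv (tensor (dual A) C) (root (tensor (dual A) C))
     (tproj (dual A) C (root A) (root C) (map (@selAC A B C) u1)) = (@xA A B C u1, @xC A B C u1)).
  { etransitivity; [apply (endv_tproj (dual A) C (root A) (root C))|].
    rewrite flAC, frAC, endv_dual. reflexivity. }
  rewrite Ex in Hk |- *. cbn [kp km tensor dual fst snd] in Hk |- *.
  rewrite projL_tproj, projR_tproj, flAC, frAC in Hk |- *.
  destruct (inv A B C sigma tau PA PB PC Ss Ws St Wt U HU HsU HtU u2 u1 (eq_sym HU12)) as (I1 & I2 & _); lia.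
Qed.
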